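(* Let $k\geq 2$ be an integer and let $G=(V,E)$ be a graph on $n$ vertices. Let $\sim$ be a symmetric binary relation on $E$ such that for every $uv\in E$ and every $w\in V$, $w$ has at most $s$ neighbours $z\in V$ with $uv\sim wz$. Then the number of homomorphic $2k$-cycles $(x_1,\dots,x_{2k})$ in $G$ such that $x_ix_{i+1}\sim x_jx_{j+1}$ for some $i\neq j$ (indices modulo $2k$) is at most $$32k^{3/2}s^{1/2}\Delta(G)^{1/2}n^{\frac{1}{2k}}\hom(C_{2k},G)^{1-\frac{1}{2k}}.$$
   Context: A homomorphic $2k$-cycle in $G$ is a tuple $(x_1,\dots,x_{2k})\in V^{2k}$ (not necessarily distinct) with $x_ix_{i+1}\in E$ for all $1\leq i\leq 2k$, where $x_{2k+1}:=x_1$. $\hom(H,G)$ denotes the number of graph homomorphisms from $H$ to $G$ (maps $V(H)\to V(G)$ sending edges to edges); thus $\hom(C_{2k},G)$ is the number of homomorphic $2k$-cycles. $\Delta(G)$ is the maximum degree. *)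

(* Defs.v *)
From mathcomp Require Import all_boot all_order all_algebra.
From mathcomp Require Import all_classical all_reals all_analysis.
Set Implicit Arguments. Unset Strict Implicit. Unset Printing Implicit Defensive.

(* Simple graph: e : rel V symmetric and irreflexive, V a finType (n = #|V|).
   An edge uv is represented by the unordered pair [set u; v] : {set V}. *)
Definition simple_graph (V : finType) (e : rel V) : Prop :=
  symmetric e /\ irreflexive e.

Definition is_hom_cycle (V : finType) (e : rel V) (m : nat) (x : {ffun 'I_m -> V}) : bool :=
  [forall i : 'I_m, e (x i) (x (ordS i))].

Definition hom_cycle (V : finType) (e : rel V) (m : nat) : nat :=
  #|[set x : {ffun 'I_m -> V} | is_hom_cycle e x]|.

Definition max_deg (V : finType) (e : rel V) : nat :=
  \max_(v : V) #|[set w | e v w]|.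

Definition cyc_edge (V : finType) (m : nat) (x : {ffun 'I_m -> V}) (i : 'I_m) : {set V} :=
  [set x i; x (ordS i)].

Definition bad_cycles (V : finType) (e : rel V) (sim : rel {set V}) (m : nat) :=
  [set x : {ffun 'I_m -> V} | is_hom_cycle e x &&
     [exists i : 'I_m, exists j : 'I_m, (i != j) && sim (cyc_edge x i) (cyc_edge x j)]].

(* Main.v *)
Require Import Defs.
From mathcomp Require Import all_boot all_order all_algebra.
From mathcomp Require Import all_classical all_reals all_analysis.
From mathcomp Require Import zify ring lra.
Import Order.TTheory GRing.Theory Num.Theory.
Set Implicit Arguments. Unset Strict Implicit. Unset Printing Implicit Defensive.

Lemma two_mul_le (x y : nat) : 2 * (x * y) <= x ^ 2 + y ^ 2.
Proof.
have := (nat_AGM2 x y).1; rewrite sqrnD.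
have -> : 4 * (x * y) = 2 * (x * y) + 2 * (x * y) by rewrite -mulnDl.
rewrite addnAC.
move=> h; rewrite -(leq_add2r (2 * (x * y))).
by rewrite addnAC in h.
Qed.

Lemma CS_nat (I : finType) (a b : I -> nat) :
  (\sum_i a i * b i) ^ 2 <= (\sum_i a i ^ 2) * (\sum_i b i ^ 2).
Proof.
have -> : (\sum_i a i * b i) ^ 2 = \sum_i \sum_j (a i * b i) * (a j * b j).
  by rewrite expnS expn1 big_distrl; apply: eq_bigr => i _; rewrite big_distrr.
have -> : (\sum_i a i ^ 2) * (\sum_i b i ^ 2) = \sum_i \sum_j a i ^ 2 * b j ^ 2.
  by rewrite big_distrl; apply: eq_bigr => i _; rewrite big_distrr.
rewrite -(@leq_pmul2l 2) // [X in _ <= X]mulSn mul1n.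
rewrite [X in _ <= _ + X]exchange_big -big_split big_distrr /=.
apply: leq_sum => i _; rewrite -big_split big_distrr /=; apply: leq_sum => j _.
have := two_mul_le (a i * b j) (a j * b i).
rewrite !expnMn; apply: leq_trans; rewrite eq_leq //; ring.
Qed.

Section Walks.
Variable V : finType.
Variable x0 : V.

Fixpoint seqs (m : nat) : seq (seq V) :=
  if m is m'.+1 then [seq x :: s | x <- enum V, s <- seqs m'] else [:: [::]].

Lemma mem_seqs m s : (s \in seqs m) = (size s == m).
Proof.
elim: m s => [|m IH] s; first by case: s.
case: s => [|a s] /=.
  by apply/allpairsPdep; case=> x [t [_ _]].
apply/allpairsPdep/idP => [[x [t [_ ht [_ ->]]]]|hs].
  by rewrite -(eqP (_ : size t == m)) // -IH.
by exists a, s; rewrite mem_enum IH; split.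
Qed.

Lemma uniq_seqs m : uniq (seqs m).
Proof.
elim: m => [|m IH] //=; apply: allpairs_uniq_dep => //; first exact: enum_uniq.
by move=> [a s] [b t] /= _ _ [-> ->].
Qed.

Lemma sum_seqsS m (F : seq V -> nat) :
  \sum_(s <- seqs m.+1) F s = \sum_(x : V) \sum_(s <- seqs m) F (x :: s).
Proof. by rewrite /= big_allpairs_dep big_enum. Qed.

Definition sq m (x : {ffun 'I_m -> V}) := [seq x i | i <- enum 'I_m].

Lemma nth_sq m (x : {ffun 'I_m -> V}) (i : 'I_m) : nth x0 (sq x) i = x i.
Proof. by rewrite /sq (nth_map i) ?size_enum_ord ?nth_ord_enum. Qed.

Lemma size_sq m (x : {ffun 'I_m -> V}) : size (sq x) = m.
Proof. by rewrite size_map size_enum_ord. Qed.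

Lemma sum_ffun_seqs m (F : seq V -> nat) :
  \sum_(x : {ffun 'I_m -> V}) F (sq x) = \sum_(s <- seqs m) F s.
Proof.
rewrite -(big_map (@sq m) xpredT).
apply: perm_big; apply: uniq_perm.
- rewrite map_inj_uniq ?index_enum_uniq // => x y hxy; apply/ffunP => i.
  by rewrite -!nth_sq hxy.
- exact: uniq_seqs.
move=> s; rewrite mem_seqs; apply/mapP/idP => [[x _ ->]|/eqP hs].
  by rewrite size_sq.
exists [ffun i : 'I_m => nth x0 s i]; first by rewrite mem_index_enum.
apply: (@eq_from_nth _ x0); rewrite ?size_sq // => i hi.
by rewrite hs in hi; rewrite (nth_sq _ (Ordinal hi)) ffunE.
Qed.


Lemma sum_seqs_cat a b (F : seq V -> nat) :
  \sum_(s <- seqs (a + b)) F s =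
  \sum_(s1 <- seqs a) \sum_(s2 <- seqs b) F (s1 ++ s2).
Proof.
elim: a F => [|a IH] F; first by rewrite add0n /= big_seq1.
rewrite addSn !sum_seqsS; apply: eq_bigr => x _; exact: IH.
Qed.

Lemma sum_pick (l : V) (b : bool) (G : V -> nat) :
  \sum_(w : V) ((b && (l == w)) * G w) = b * G l.
Proof.
rewrite (bigD1 l) //= eqxx andbT big1 ?addn0 // => w /negbTE.
by rewrite eq_sym => ->; rewrite andbF.
Qed.

Variable e : rel V.
Hypothesis esym : symmetric e.

Definition W m u v := \sum_(t <- seqs m) (path e u t && (last u t == v) : nat).

Lemma W0 u v : W 0 u v = (u == v).
Proof. by rewrite /W /= big_seq1 /=. Qed.

Lemma W1 u v : W 1 u v = e u v.
Proof.
rewrite /W sum_seqsS /= (eq_bigr (fun x => ((e u v && (v == x)) * 1)%N)).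
  by rewrite sum_pick muln1.
move=> x _; rewrite big_seq1 /= andbT muln1.
by case: (eqVneq x v) => [->|hxv]; rewrite ?andbF.
Qed.

Lemma W_add a b u v : W (a + b) u v = \sum_(w : V) W a u w * W b w v.
Proof.
rewrite [RHS](eq_bigr (fun w => \sum_(s1 <- seqs a)
   ((path e u s1 && (last u s1 == w)) * W b w v)%N)); last first.
  by move=> w _; rewrite /W big_distrl.
rewrite exchange_big /=.
rewrite /W sum_seqs_cat; apply: eq_bigr => s1 _.
rewrite sum_pick big_distrr /=; apply: eq_bigr => s2 _.
by rewrite cat_path last_cat; case: (path e u s1); rewrite ?mul1n ?mul0n.
Qed.

Lemma W_sym m u v : W m u v = W m v u.
Proof.
elim: m u v => [|m IH] u v; first by rewrite !W0 eq_sym.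
rewrite -addn1 W_add addnC W_add.
by apply: eq_bigr => w _; rewrite !W1 IH esym mulnC.
Qed.


Definition ttw j := \sum_(u : V) \sum_(v : V) W j u v ^ 2.


Lemma sum_W_diag a b : \sum_(u : V) W (a + b) u u = \sum_(u : V) \sum_(v : V) W a u v * W b u v.
Proof. by apply: eq_bigr => u _; rewrite W_add; apply: eq_bigr => v _; rewrite (W_sym b). Qed.

Lemma tt_alt j : ttw j = \sum_(u : V) W (j + j) u u.
Proof. by rewrite sum_W_diag; apply: eq_bigr => u _; apply: eq_bigr => v _; rewrite expnS expn1. Qed.

Lemma tt_logconv j : ttw j.+1 ^ 2 <= ttw j * ttw j.+2.
Proof.
have -> : ttw j.+1 = \sum_(u : V) \sum_(v : V) W j u v * W j.+2 u v.
  by rewrite tt_alt -sum_W_diag; congr (\sum_(u : V) W _ u u); rewrite !addnS addSn.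
rewrite !pair_bigA /= /ttw !pair_bigA /=.
exact: (CS_nat (fun p : V * V => W j p.1 p.2) (fun p : V * V => W j.+2 p.1 p.2)).
Qed.

Lemma tt0 : ttw 0 = #|V|.
Proof.
rewrite /ttw -sum1_card; apply: eq_bigr => u _.
rewrite (bigD1 u) //= W0 eqxx big1 // => v /negbTE.
by rewrite W0 eq_sym => ->.
Qed.

Lemma tt_pow j : ttw j ^ j.+1 <= ttw 0 * ttw j.+1 ^ j.
Proof.
elim: j => [|j IH]; first by rewrite expn1 expn0 muln1.
have [->|hpos] := posnP (ttw j.+1); first by rewrite exp0n.
rewrite -(@leq_pmul2l (ttw j.+1 ^ j)) ?expn_gt0 ?hpos //.
apply: (@leq_trans ((ttw j.+1 ^ 2) ^ j.+1)).
  by rewrite -expnD -expnM; apply/eq_leq; congr (_ ^ _); lia.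
apply: (@leq_trans ((ttw j * ttw j.+2) ^ j.+1)).
  by rewrite leq_exp2r // tt_logconv.
rewrite expnMn mulnA [ttw j.+1 ^ j * ttw 0]mulnC.
by rewrite leq_mul2r IH orbT.
Qed.


Lemma card_set_sum (T : finType) (P : pred T) : #|[set x | P x]| = \sum_x (P x : nat).
Proof.
rewrite -sum1_card big_mkcond /=; apply: eq_bigr => x _; rewrite inE.
by case: (P x).
Qed.

Lemma sum_seqs_rcons n (F : seq V -> nat) :
  \sum_(s <- seqs n.+1) F s = \sum_(l <- seqs n) \sum_(b : V) F (rcons l b).
Proof.
rewrite -addn1 sum_seqs_cat; apply: eq_bigr => l _.
rewrite sum_seqsS; apply: eq_bigr => b _; by rewrite /= big_seq1 cats1.
Qed.

Definition homs m (s : seq V) := [forall i : 'I_m, e (nth x0 s i) (nth x0 s (i.+1 %% m))].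

Lemma is_hom_cycle_sq m (x : {ffun 'I_m -> V}) : is_hom_cycle e x = homs m (sq x).
Proof.
apply: eq_forallb => i; by rewrite -(nth_sq x i) -(nth_sq x (ordS i)).
Qed.

Lemma homs_path n c l : size l = n -> homs n.+1 (c :: l) = path e c (rcons l c).
Proof.
move=> hl; apply/forallP/(pathP x0) => [h i hi|h i].
  rewrite size_rcons hl in hi; move: (h (Ordinal hi)) => /=.
  rewrite -rcons_cons !nth_rcons /= hl hi.
  move: hi; rewrite ltnS leq_eqVlt => /orP [/eqP ->|hlt].
    by rewrite ltnn modnn eqxx.
  by rewrite hlt modn_small.
have := h i; rewrite size_rcons hl ltn_ord => /(_ isT).
rewrite -rcons_cons !nth_rcons /= hl ltnS.
have := ltn_ord i; rewrite ltnS leq_eqVlt => /orP [/eqP ->|hlt].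
  by rewrite ltnn eqxx modnn /=.
by rewrite hlt orbT modn_small.
Qed.

Lemma hom_cycle_W n : hom_cycle e n.+1 = \sum_(c : V) W n.+1 c c.
Proof.
rewrite /hom_cycle card_set_sum.
rewrite (eq_bigr (fun x => homs n.+1 (sq x) : nat)); last first.
  by move=> x _; rewrite is_hom_cycle_sq.
rewrite (@sum_ffun_seqs n.+1 (fun s => homs n.+1 s : nat)) sum_seqsS; apply: eq_bigr => c _.
rewrite /W sum_seqs_rcons big_seq [RHS]big_seq; apply: eq_bigr => l.
rewrite mem_seqs => /eqP hl; rewrite homs_path //.
rewrite (eq_bigr (fun b => ((path e c (rcons l c) && (c == b)) * 1)%N)).
  by rewrite sum_pick muln1.
move=> b _; rewrite last_rcons muln1 eq_sym.
by case: (eqVneq c b) => [->|_]; rewrite ?andbF ?andbT.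
Qed.

Lemma hom_cycle_tt k : 0 < k -> hom_cycle e (2 * k) = ttw k.
Proof.
move=> hk; rewrite tt_alt (_ : k + k = (2 * k).-1.+1); last by lia.
rewrite -hom_cycle_W; congr hom_cycle; lia.
Qed.


Lemma nth_rot j (s : seq V) p : j <= size s -> p < size s ->
  nth x0 (rot j s) p = nth x0 s ((p + j) %% size s).
Proof.
move=> hj hp; rewrite /rot nth_cat size_drop.
case: ltnP => h.
  by rewrite nth_drop modn_small addnC //; lia.
rewrite nth_take; last by lia.
have -> : (p + j) %% size s = p - (size s - j).
  rewrite (_ : p + j = (p - (size s - j)) + size s); last by lia.
  by rewrite modnDr modn_small //; lia.
by [].
Qed.

Lemma sum_seqs_rot m j (F : seq V -> nat) :
  \sum_(s <- seqs m) F (rot j s) = \sum_(s <- seqs m) F s.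
Proof.
rewrite -(big_map (rot j) xpredT); apply: perm_big; apply: uniq_perm.
- by rewrite map_inj_uniq ?uniq_seqs //; exact: rot_inj.
- exact: uniq_seqs.
move=> s; rewrite mem_seqs; apply/mapP/idP => [[t ht ->]|hs].
  by rewrite size_rot -mem_seqs.
by exists (rotr j s); rewrite ?rotrK // mem_seqs size_rotr.
Qed.

Lemma homs_cycle m s : size s = m.+1 -> homs m.+1 s = cycle e s.
Proof. by case: s => [//|c l] /= [hl]; rewrite homs_path. Qed.

Variable sim : rel {set V}.
Hypothesis simsym : forall u v w z : V, e u v -> e w z ->
     sim [set u; v] [set w; z] = sim [set w; z] [set u; v].

Definition Es m s i := [set nth x0 s (i %% m); nth x0 s (i.+1 %% m)].

Definition bads m s := homs m s &&
  [exists i : 'I_m, exists j : 'I_m, (i != j) && sim (Es m s i) (Es m s j)].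

Lemma card_bad m : #|bad_cycles e sim m| = \sum_(s <- seqs m) (bads m s : nat).
Proof.
rewrite /bad_cycles card_set_sum -(@sum_ffun_seqs m (fun s => bads m s : nat)).
apply: eq_bigr => x _; rewrite /bads -is_hom_cycle_sq; congr (nat_of_bool (_ && _)).
apply: eq_existsb => i; apply: eq_existsb => j; congr (_ && sim _ _).
  by rewrite /cyc_edge /Es modn_small // (nth_sq x i) -(nth_sq x (ordS i)).
by rewrite /cyc_edge /Es modn_small // (nth_sq x j) -(nth_sq x (ordS j)).
Qed.


Definition Qs m k s j := [exists d : 'I_k, sim (Es m s (j + d.+1)) (Es m s j)].

Lemma Es_modD m s i : 0 < m -> Es m s (i + m) = Es m s i.
Proof. by move=> hm; rewrite /Es -addSn !modnDr. Qed.

Lemma Qs_pair m k s (a b : 'I_m) : m = k + k -> a < b ->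
  sim (Es m s a) (Es m s b) -> sim (Es m s b) (Es m s a) ->
  exists j : 'I_m, Qs m k s j.
Proof.
move=> hm hab h1 h2; case: (leqP (b - a) k) => hd.
  have hd' : b - a - 1 < k by lia.
  exists a; apply/existsP; exists (Ordinal hd') => /=.
  by rewrite (_ : a + (b - a - 1).+1 = b) //; lia.
have hd' : a + m - b - 1 < k by have := ltn_ord b; lia.
exists b; apply/existsP; exists (Ordinal hd') => /=.
rewrite (_ : b + (a + m - b - 1).+1 = a + m); last by have := ltn_ord b; lia.
by rewrite Es_modD //; lia.
Qed.

Lemma homs_edge m s (i : 'I_m) : homs m s ->
  e (nth x0 s (i %% m)) (nth x0 s (i.+1 %% m)).
Proof. by move=> /forallP /(_ i) h; rewrite (modn_small (ltn_ord i)). Qed.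

Lemma bads_le m k s : m = k + k ->
  (bads m s : nat) <= \sum_(j : 'I_m) (homs m s && Qs m k s j : nat).
Proof.
move=> hm; case hb: (bads m s) => //.
move: hb => /andP [hh /existsP [i /existsP [j /andP [hij hs]]]].
have hs' : sim (Es m s j) (Es m s i).
  by rewrite /Es simsym // ?homs_edge.
have [j0 hj0] : exists j : 'I_m, Qs m k s j.
  case: (ltngtP i j) => h.
  - exact: (Qs_pair hm h hs hs').
  - exact: (Qs_pair hm h hs' hs).
  - by move: hij; rewrite (val_inj h) eqxx.
by rewrite (bigD1 j0) //= hh hj0.
Qed.

Lemma Es_rot m j s i : size s = m -> j <= m -> 0 < m ->
  Es m (rot j s) i = Es m s (i + j).
Proof.
move=> hs hj hm; rewrite /Es !nth_rot ?hs ?ltn_pmod //.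
by rewrite !modnDml addSn.
Qed.

Lemma rot_term m k j s : size s = m -> j < m ->
  (homs m (rot j s) && Qs m k (rot j s) 0) = (homs m s && Qs m k s j).
Proof.
move=> hs hj; case: m hs hj => [//|m] hs hj.
rewrite !homs_cycle ?size_rot // rot_cycle; congr (_ && _).
apply: eq_existsb => d; rewrite !Es_rot // ?(ltnW hj) //.
by rewrite add0n addnC.
Qed.

Lemma bad_le_B0 k : 0 < k ->
  #|bad_cycles e sim (k + k)| <=
  (k + k) * \sum_(s <- seqs (k + k)) (homs (k + k) s && Qs (k + k) k s 0 : nat).
Proof.
move=> hk; rewrite card_bad.
apply: (@leq_trans (\sum_(s <- seqs (k + k)) \sum_(j : 'I_(k + k))
    (homs (k + k) s && Qs (k + k) k s j : nat))).
  by apply: leq_sum => s _; apply: bads_le.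
rewrite exchange_big /= -[X in _ <= X * _](card_ord (k + k)) -sum1_card big_distrl /=.
apply: leq_sum => j _; rewrite mul1n -(sum_seqs_rot (k + k) j (fun s => homs (k + k) s && Qs (k + k) k s 0 : nat)).
rewrite big_seq [X in _ <= X]big_seq; apply: eq_leq; apply: eq_bigr => s.
by rewrite mem_seqs => /eqP hs; rewrite rot_term.
Qed.


Lemma W_rcons n v c : W n.+1 v c = \sum_(l <- seqs n) (path e v (rcons l c) : nat).
Proof.
rewrite /W sum_seqs_rcons; apply: eq_bigr => l _.
rewrite (eq_bigr (fun b => ((path e v (rcons l c) && (c == b)) * 1)%N)).
  by rewrite sum_pick muln1.
move=> b _; rewrite last_rcons muln1 eq_sym.
by case: (eqVneq c b) => [->|_]; rewrite ?andbF ?andbT.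
Qed.

Definition Rel k u y c := [exists d : 'I_k,
  sim [set nth x0 (u :: y) d; nth x0 (u :: y) d.+1] [set c; u]].

Lemma B0_decomp k : 1 < k ->
  \sum_(s <- seqs (k + k)) (homs (k + k) s && Qs (k + k) k s 0 : nat) =
  \sum_(c : V) \sum_(u : V) \sum_(y <- seqs k)
     ((e c u && path e u y && Rel k u y c) * W k.-1 (last u y) c).
Proof.
move=> hk.
have hm : k + k = (k + (k - 2)).+2 by lia.
rewrite hm sum_seqsS; apply: eq_bigr => c _; rewrite sum_seqsS; apply: eq_bigr => u _.
rewrite sum_seqs_cat big_seq [RHS]big_seq; apply: eq_bigr => y.
rewrite mem_seqs => /eqP hy.
have -> : k.-1 = (k - 2).+1 by lia.
rewrite W_rcons big_distrr /= big_seq [RHS]big_seq; apply: eq_bigr => z.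
rewrite mem_seqs => /eqP hz.
rewrite homs_path; last by rewrite /= size_cat hy hz; lia.
rewrite rcons_cons /= rcons_cat cat_path.
have -> : Qs (k + (k - 2)).+2 k [:: c, u & y ++ z] 0 = Rel k u y c.
  apply: eq_existsb => d; rewrite add0n /Es.
  rewrite (modn_small (_ : d.+1 < _)); last by have := ltn_ord d; lia.
  rewrite (modn_small (_ : d.+2 < _)); last by have := ltn_ord d; lia.
  rewrite !modn_small //= -!cat_cons !nth_cat /= hy ltnS (ltnW (ltn_ord d)).
  by rewrite ltn_ord.
by case: (e c u); case: (path e u y); case: (Rel k u y c); case: (path _ _ _).
Qed.

End Walks.

Section Analytic2.
Local Open Scope ring_scope.


Variable R : realType.

Lemma amgm_w (a b x y : R) : 0 <= a -> 0 <= b -> (a = 0 -> x = 0) -> (b = 0 -> y = 0) ->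
  2 * (x * y) <= a * (y ^+ 2 / b) + b * (x ^+ 2 / a).
Proof.
move=> ha hb hx hy.
have [a0|apos] := eqVneq a 0.
  rewrite (hx a0) mul0r mulr0 a0 mul0r add0r mulr_ge0 // divr_ge0 // ?sqr_ge0 //.
have [b0|bpos] := eqVneq b 0.
  rewrite (hy b0) mulr0 mulr0 b0 mul0r addr0 mulr_ge0 // divr_ge0 // ?sqr_ge0 //.
rewrite -subr_ge0.
have -> : a * (y ^+ 2 / b) + b * (x ^+ 2 / a) - 2 * (x * y) = (a * y - b * x) ^+ 2 / (a * b).
  by field; apply/andP; split.
by rewrite divr_ge0 ?sqr_ge0 // mulr_ge0.
Qed.

Lemma CS_w (T : Type) (r : seq T) (f p : T -> R) :
  (forall i, 0 <= p i) -> (forall i, p i = 0 -> f i = 0) ->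
  (\sum_(i <- r) f i) ^+ 2 <= (\sum_(i <- r) p i) * (\sum_(i <- r) (f i ^+ 2 / p i)).
Proof.
move=> hp hf.
have -> : (\sum_(i <- r) f i) ^+ 2 = \sum_(i <- r) \sum_(j <- r) f i * f j.
  by rewrite expr2 big_distrl; apply: eq_bigr => i _; rewrite big_distrr.
have -> : (\sum_(i <- r) p i) * (\sum_(i <- r) (f i ^+ 2 / p i)) =
    \sum_(i <- r) \sum_(j <- r) p i * (f j ^+ 2 / p j).
  by rewrite big_distrl; apply: eq_bigr => i _; rewrite big_distrr.
rewrite -(@ler_pM2l _ 2) // [X in _ <= X]mulr_natl mulr2n.
rewrite [X in _ <= _ + X]exchange_big -big_split big_distrr /=.
apply: ler_sum => i _; rewrite -big_split big_distrr /=; apply: ler_sum => j _.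
by have := amgm_w (hp i) (hp j) (@hf i) (@hf j).
Qed.


Variable V : finType.
Variable x0 : V.
Variable e : rel V.
Hypothesis esym : symmetric e.

Lemma sum_pickR (l : V) (G : V -> R) :
  \sum_(w : V) ((l == w)%:R * G w) = G l.
Proof.
rewrite (bigD1 l) //= eqxx mul1r big1 ?addr0 // => w /negbTE.
by rewrite eq_sym => ->; rewrite mul0r.
Qed.

Lemma walk_sum k u (G : V -> R) :
  \sum_(y <- seqs V k) (path e u y)%:R * G (last u y) =
  \sum_(v : V) (W e k u v)%:R * G v.
Proof.
under [RHS]eq_bigr => v _ do rewrite /W natr_sum big_distrl /=.
rewrite exchange_big /=; apply: eq_bigr => y _.
rewrite -[LHS](sum_pickR (last u y) (fun v => (path e u y)%:R * G v)).
apply: eq_bigr => v _; rewrite mulrA -natrM; congr (_%:R * _).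
by case: (path e u y); case: (last u y == v).
Qed.

Lemma walk_pos k u y : y \in seqs V k -> path e u y -> (0 < W e k u (last u y))%N.
Proof.
move=> hy hp; rewrite /W (big_rem y) //= hp eqxx.
by rewrite addSn.
Qed.


Variable sim : rel {set V}.
Variable s : R.
Hypothesis hs : forall a b w : V, e a b ->
  (#|[set z | e w z && sim [set a; b] [set w; z]]|)%:R <= s.

Lemma S_bound k u y : size y = k -> path e u y ->
  \sum_(c : V) ((e c u && Rel x0 sim k u y c) : nat)%:R <= k%:R * s.
Proof.
move=> hy hp.
pose E (d : 'I_k) := [set nth x0 (u :: y) d; nth x0 (u :: y) d.+1].
apply: (@le_trans _ _ (\sum_(c : V) \sum_(d : 'I_k)
    ((e u c && sim (E d) [set u; c]) : nat)%:R)).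
  apply: ler_sum => c _.
  case h: (e c u && Rel x0 sim k u y c); last by rewrite sumr_ge0.
  move: h => /andP [hcu /existsP [d hd]].
  rewrite (bigD1 d) //= esym hcu /E (finset.setUC [set u]) hd /= lerDl sumr_ge0 //.
rewrite exchange_big /=.
apply: (@le_trans _ _ (\sum_(d : 'I_k) s)); last first.
  by rewrite sumr_const card_ord mulr_natl.
apply: ler_sum => d _; rewrite -natr_sum -card_set_sum.
apply: hs; move/(pathP x0): hp => /(_ d); rewrite hy ltn_ord => /(_ isT).
by [].
Qed.


Lemma sum_flat k (F : V * (V * seq V) -> R) :
  \sum_(i <- [seq (c, p) | c <- enum V, p <- [seq (u, y) | u <- enum V, y <- seqs V k]]) F i
  = \sum_(c : V) \sum_(u : V) \sum_(y <- seqs V k) F (c, (u, y)).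
Proof.
rewrite big_allpairs_dep big_enum /=; apply: eq_bigr => c _.
by rewrite big_allpairs_dep big_enum.
Qed.

Lemma deg_le c : (\sum_(u : V) (e c u)%:R : R) <= (max_deg e)%:R.
Proof.
rewrite -natr_sum ler_nat -card_set_sum.
rewrite /max_deg; exact: (@leq_bigmax _ (fun v => #|[set w | e v w]|) c).
Qed.

Lemma mul_div_le (w x : R) : 0 <= x -> w * (x / w) <= x.
Proof.
move=> hx; have [->|hw] := eqVneq w 0; first by rewrite mul0r.
by rewrite mulrC divfK.
Qed.

Lemma B0_bound k : (1 < k)%N ->
  ((\sum_(c : V) \sum_(u : V) \sum_(y <- seqs V k)
     ((e c u && path e u y && Rel x0 sim k u y c) * W e k.-1 (last u y) c)%N)%:R : R) ^+ 2
  <= (k%:R * s * (ttw e k)%:R) * ((max_deg e)%:R * (ttw e k.-1)%:R).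
Proof.
move=> hk.
pose A (i : V * (V * seq V)) := [&& e i.1 i.2.1, path e i.2.1 i.2.2,
   Rel x0 sim k i.2.1 i.2.2 i.1 & size i.2.2 == k].
pose f i : R := (A i)%:R * (W e k.-1 (last i.2.1 i.2.2) i.1)%:R.
pose p i : R := (A i)%:R * (W e k i.2.1 (last i.2.1 i.2.2))%:R.
pose r := [seq (c, p) | c <- enum V, p <- [seq (u, y) | u <- enum V, y <- seqs V k]].
have hB : (\sum_(c : V) \sum_(u : V) \sum_(y <- seqs V k)
     ((e c u && path e u y && Rel x0 sim k u y c) * W e k.-1 (last u y) c)%N)%:R
     = \sum_(i <- r) f i.
  rewrite sum_flat natr_sum; apply: eq_bigr => c _; rewrite natr_sum.
  apply: eq_bigr => u _; rewrite natr_sum big_seq [RHS]big_seq.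
  apply: eq_bigr => y; rewrite mem_seqs => hy.
  by rewrite /f /A /= hy andbT natrM !andbA.
rewrite hB.
have hp0 : forall i, 0 <= p i by move=> i; rewrite mulr_ge0 ?ler0n.
have hpf : forall i, p i = 0 -> f i = 0.
  move=> [c [u y]]; rewrite /p /f /=.
  case hA : (A (c, (u, y))); last by rewrite !mul0r.
  move: hA => /and4P [_ hpath _ hsz] /eqP; rewrite mul1r pnatr_eq0 => h.
  have hy : y \in seqs V k by rewrite mem_seqs.
  have := walk_pos hy hpath.
  by rewrite lt0n h.
apply: (le_trans (CS_w r hp0 hpf)).
apply: ler_pM.
- by rewrite sumr_ge0.
- by rewrite sumr_ge0 // => i _; rewrite divr_ge0 ?sqr_ge0.
- rewrite sum_flat exchange_big /=.
  apply: (@le_trans _ _ (\sum_(u : V) \sum_(y <- seqs V k)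
     (path e u y)%:R * ((W e k u (last u y))%:R * (k%:R * s)))).
    apply: ler_sum => u _; rewrite exchange_big /= big_seq [X in _ <= X]big_seq.
    apply: ler_sum => y; rewrite mem_seqs => hy.
    case hpath: (path e u y); last first.
      by rewrite mul0r big1 // => c _; rewrite /p /A /= hpath andbF mul0r.
    rewrite mul1r /p /A /= hpath hy /= -mulr_suml mulrC ler_wpM2l //.
    apply: (@le_trans _ _ (\sum_(c : V) ((e c u && Rel x0 sim k u y c) : nat)%:R)).
      by apply: ler_sum => c _; rewrite !andbT.
    exact: S_bound (eqP hy) hpath.
  under eq_bigr => u _ do rewrite (walk_sum k u (fun v => (W e k u v)%:R * (k%:R * s))).
  rewrite /ttw natr_sum mulr_sumr; apply: ler_sum => u _.
  rewrite natr_sum mulr_sumr; apply: ler_sum => v _.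
  by rewrite natrX le_eqVlt; apply/orP; left; apply/eqP; ring.
- rewrite sum_flat.
  apply: (@le_trans _ _ (\sum_(c : V) \sum_(u : V) (e c u)%:R * \sum_(y <- seqs V k)
     (path e u y)%:R * ((W e k.-1 (last u y) c)%:R ^+ 2 / (W e k u (last u y))%:R))).
    apply: ler_sum => c _; apply: ler_sum => u _; rewrite mulr_sumr.
    apply: ler_sum => y _; rewrite /f /p.
    case hA : (A (c, (u, y))); last first.
      by rewrite !mul0r expr0n /= mul0r mulr_ge0 ?ler0n // mulr_ge0 ?ler0n // divr_ge0 ?sqr_ge0.
    move: (hA) => /and4P [/= -> -> _ _].
    by rewrite !mul1r.
  apply: (@le_trans _ _ (\sum_(c : V) \sum_(u : V) (e c u)%:R *
      \sum_(v : V) (W e k.-1 v c)%:R ^+ 2)).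
    apply: ler_sum => c _; apply: ler_sum => u _.
    rewrite (walk_sum k u (fun v => (W e k.-1 v c)%:R ^+ 2 / (W e k u v)%:R)).
    rewrite ler_wpM2l //; apply: ler_sum => v _; exact: mul_div_le (sqr_ge0 _).
  apply: (@le_trans _ _ (\sum_(c : V) (max_deg e)%:R *
      \sum_(v : V) (W e k.-1 v c)%:R ^+ 2)).
    apply: ler_sum => c _; rewrite -mulr_suml ler_wpM2r ?deg_le //.
    by rewrite sumr_ge0 // => v _; rewrite sqr_ge0.
  rewrite -mulr_sumr ler_wpM2l // /ttw natr_sum exchange_big /=.
  apply: ler_sum => c _; rewrite natr_sum; apply: ler_sum => v _.
  by rewrite natrX.
Qed.



End Analytic2.

Section Final2.
Local Open Scope ring_scope.


Variable R : realType.

Lemma sqpow (x a : R) : 0 <= x -> (x `^ a) ^+ 2 = x `^ (a * 2).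
Proof. by move=> hx; rewrite -(powR_mulrn _ (powR_ge0 _ _)) -powRrM. Qed.

Lemma kpow (x a : R) (k : nat) : 0 <= x -> (x `^ a) ^+ k = x `^ (a * k%:R).
Proof. by move=> hx; rewrite -(powR_mulrn _ (powR_ge0 _ _)) -powRrM. Qed.

Lemma final_ineq (k : nat) (b B0 s D n H T : R) : (2 <= k)%N ->
  0 <= b -> b <= (2 * k)%:R * B0 -> 0 <= B0 -> 0 < s -> 0 < D -> 0 < n -> 0 < H ->
  0 <= T -> B0 ^+ 2 <= (k%:R * s * H) * (D * T) -> T ^+ k <= n * H ^+ k.-1 ->
  b <= 32 * (k%:R `^ (3 / 2)) * (s `^ (1 / 2)) * (D `^ (1 / 2))
       * (n `^ (1 / (2 * k)%:R)) * (H `^ (1 - 1 / (2 * k)%:R)).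
Proof.
move=> hk hb hbB hB0 hs hD hn hH hT hB2 hTk.
have kpos : 0 < k%:R :> R by rewrite ltr0n; lia.
pose Y := n `^ (k%:R^-1) * H `^ (1 - k%:R^-1).
have hY0 : 0 <= Y by rewrite mulr_ge0 ?powR_ge0.
have hTY : T <= Y.
  rewrite -(ler_pXn2r (_ : (0 < k)%N)) ?nnegrE //; last by lia.
  rewrite exprMn !kpow ?(ltW hn) ?(ltW hH) //.
  rewrite mulVf ?lt0r_neq0 // powRr1 ?(ltW hn) //.
  have -> : (1 - k%:R^-1) * k%:R = (k.-1)%:R :> R.
    rewrite -subn1 natrB; last by lia.
    by field; apply: lt0r_neq0.
  by rewrite powR_mulrn ?(ltW hH).
set RHS := (X in b <= X).
have hR0 : 0 <= RHS by rewrite /RHS !mulr_ge0 ?powR_ge0.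
apply: (le_trans hbB).
have hL0 : 0 <= (2 * k)%:R * B0 by rewrite mulr_ge0.
rewrite -(ler_pXn2r (isT : (0 < 2)%N)) ?nnegrE //.
have -> : RHS ^+ 2 = 1024 * k%:R ^+ 3 * s * D * Y * H.
  rewrite /RHS !exprMn !sqpow ?ler0n ?(ltW hs) ?(ltW hD) ?(ltW hn) ?(ltW hH) //.
  rewrite (_ : 3 / 2 * 2 = 3%:R); last by field.
  rewrite powR_mulrn ?ler0n // (_ : 1 / 2 * 2 = 1); last by field.
  rewrite !powRr1 ?(ltW hs) ?(ltW hD) //.
  rewrite (_ : 1 / (2 * k)%:R * 2 = k%:R^-1); last first.
    by rewrite natrM; field; apply: lt0r_neq0.
  rewrite (_ : (1 - 1 / (2 * k)%:R) * 2 = (1 - k%:R^-1) + 1); last first.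
    by rewrite natrM; field; apply: lt0r_neq0.
  rewrite powRD ?powRr1 ?(ltW hH) /Y; last by rewrite (lt0r_neq0 hH) implybT.
  by ring.
all: try done.
apply: (@le_trans _ _ (4 * (k%:R ^+ 3 * s * D * H) * T)).
  rewrite exprMn natrM.
  apply: (@le_trans _ _ ((2%:R * k%:R) ^+ 2 * ((k%:R * s * H) * (D * T)))).
    by rewrite ler_wpM2l ?sqr_ge0.
  by rewrite le_eqVlt; apply/orP; left; apply/eqP; ring.
have hP : 0 <= k%:R ^+ 3 * s * D * H by rewrite !mulr_ge0 ?ler0n ?(ltW hs) ?(ltW hD) ?(ltW hH).
apply: (@le_trans _ _ (4 * (k%:R ^+ 3 * s * D * H) * Y)).
  by rewrite ler_wpM2l // mulr_ge0.
rewrite (_ : 1024 * k%:R ^+ 3 * s * D * Y * H = 1024 * (k%:R ^+ 3 * s * D * H) * Y); last by ring.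
by rewrite ler_wpM2r // ler_wpM2r // ler_nat.
Qed.



End Final2.

Local Open Scope ring_scope.

Theorem lemma2p1 (R : realType) (k : nat) (V : finType) (e : rel V)
    (sim : rel {set V}) (s : R) :
  (2 <= k)%N -> 0 <= s ->
  simple_graph e ->
  (* ~ is a symmetric relation on E *)
  (forall u v w z : V, e u v -> e w z ->
     sim [set u; v] [set w; z] = sim [set w; z] [set u; v]) ->
  (* every w has at most s neighbours z with uv ~ wz, for every edge uv *)
  (forall u v w : V, e u v ->
     (#|[set z | e w z && sim [set u; v] [set w; z]]|)%:R <= s) ->
  (#|bad_cycles e sim (2 * k)|)%:R <=
    32 * (k%:R `^ (3 / 2)) * (s `^ (1 / 2)) * ((max_deg e)%:R `^ (1 / 2))
       * (#|V|%:R `^ (1 / (2 * k)%:R))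
       * ((hom_cycle e (2 * k))%:R `^ (1 - 1 / (2 * k)%:R)).
Proof.
move=> hk hs0 [esym eirr] hsym hcount.
have hR0 : 0 <= 32 * (k%:R `^ (3 / 2)) * (s `^ (1 / 2)) * ((max_deg e)%:R `^ (1 / 2))
       * (#|V|%:R `^ (1 / (2 * k)%:R))
       * ((hom_cycle e (2 * k))%:R `^ (1 - 1 / (2 * k)%:R)).
  by rewrite !mulr_ge0 ?powR_ge0.
case: (pickP (fun _ : V => true)) => [x0 _|hV]; last first.
  have -> : #|bad_cycles e sim (2 * k)| = 0%N.
    apply/eqP; rewrite cards_eq0; apply/eqP/setP => x.
    have h0 : (0 < 2 * k)%N by lia.
    by have := hV (x (Ordinal h0)).
  by [].
have hk0 : (0 < k)%N by lia.
have h1 := bad_le_B0 x0 hsym hk0.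
rewrite (B0_decomp x0 e sim hk) in h1.
set B0 := (\sum_(c : V) _)%N in h1.
have h2 : (B0%:R : R) ^+ 2 <= (k%:R * s * (ttw e k)%:R) * ((max_deg e)%:R * (ttw e k.-1)%:R).
  exact: (B0_bound x0 esym hcount hk).
have h3 := tt_pow esym k.-1.
rewrite (prednK hk0) tt0 in h3.
rewrite (hom_cycle_tt x0 esym hk0).
rewrite (hom_cycle_tt x0 esym hk0) in hR0.
have [B00|B0pos] := eqVneq B0 0%N.
  rewrite B00 muln0 leqn0 in h1.
  have hb0 : #|bad_cycles e sim (2 * k)| = 0%N by rewrite mul2n -addnn (eqP h1).
  by rewrite hb0.
have hprod : 0 < (k%:R * s * (ttw e k)%:R) * ((max_deg e)%:R * (ttw e k.-1)%:R) :> R.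
  apply: (lt_le_trans _ h2); rewrite exprn_gt0 // ltr0n lt0n B0pos //.
have hpos (x : R) : 0 <= x -> (x = 0 -> False) -> 0 < x.
  by move=> hx hne; rewrite lt_neqAle hx andbT eq_sym; apply/eqP.
apply: (final_ineq hk (ler0n _ _) _ (ler0n _ _) _ _ _ _ (ler0n _ _) h2).
- by rewrite mul2n -addnn -natrM ler_nat.
- by apply: hpos => // hz; move: hprod; rewrite hz !(mulr0, mul0r) ltxx.
- by apply: hpos => // hz; move: hprod; rewrite hz !(mulr0, mul0r) ltxx.
- by rewrite ltr0n; apply/card_gt0P; exists x0.
- by apply: hpos => // hz; move: hprod; rewrite hz !(mulr0, mul0r) ltxx.
- by rewrite -!natrX -natrM ler_nat.
Qed.
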